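(* Let $\alpha<\beta$ be positive integers. There is no function $f:\mathbb{N}\to\mathbb{N}$ such that $\mathrm{ecrw}_\alpha(G)\le f(\mathrm{ecrw}_\beta(G))$ for all graphs $G$. (Indeed, the graphs $G^{\alpha+1}_n$, $n\in\mathbb{N}$, have $\beta$-edge-crossing width $0$ and unbounded $\alpha$-edge-crossing width.)
   Context: For positive integers $n,k$, the graph $G^n_k$ has vertex set $A\cup B_k$ where $A=\{a_1,\dots,a_n\}$ and $B_k=\{(W,\ell): W\subseteq A,\ |W|=2,\ \ell\in[k]\}$, with $a\in A$ adjacent to $(W,\ell)$ iff $a\in W$, and no other edges. A tree-cut decomposition of a graph $G$ is a pair $\mathcal{T}=(T,\{X_t\}_{t\in V(T)})$ where $T$ is a tree and the bags $X_t\subseteq V(G)$ are pairwise disjoint (possibly empty) with $\bigcup_{t\in V(T)}X_t=V(G)$. For a node $t$ of $T$, let $T_1,\dots,T_m$ be the connected components of $T-t$ and $Z_i=\bigcup_{s\in V(T_i)}X_s$; $\mathrm{cross}_{\mathcal{T}}(t)$ is the number of edges of $G$ whose two endpoints lie in two distinct sets among $Z_1,\dots,Z_m$ (if $T$ has one node, $\mathrm{cross}_{\mathcal T}(t)=0$). The crossing number of $\mathcal{T}$ is $\max_{t}\mathrm{cross}_{\mathcal{T}}(t)$, and the thickness of $\mathcal{T}$ is $\max_t|X_t|$. $\mathrm{ecrw}_\alpha(G)$ is the minimum crossing number over tree-cut decompositions of $G$ of thickness at most $\alpha$. *)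

(* Defs.v *)
From mathcomp Require Import all_boot.
Set Implicit Arguments. Unset Strict Implicit. Unset Printing Implicit Defensive.

Definition is_tree (N : finType) (tr : rel N) : Prop :=
  [/\ 0 < #|N|, symmetric tr, irreflexive tr,
      (forall x y : N, connect tr x y) &
      (forall c : seq N, uniq c -> 2 < size c -> ~~ cycle tr c)].

Definition same_comp (N : finType) (tr : rel N) (t x y : N) : bool :=
  connect [rel a b | [&& tr a b, a != t & b != t]] x y.

(* A tree-cut decomposition of G (vertex set V) over tree (N, tr) is given by the
   map bag : V -> N, with X_t = [set v | bag v == t] (pairwise disjoint, covering V). *)
Definition bagset (V N : finType) (bag : V -> N) (t : N) : {set V} :=
  [set v | bag v == t].

Definition separated (V N : finType) (tr : rel N) (bag : V -> N) (t : N) (u v : V)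
  : bool :=
  [&& bag u != t, bag v != t & ~~ same_comp tr t (bag u) (bag v)].

Definition cross (V N : finType) (e : rel V) (tr : rel N) (bag : V -> N) (t : N)
  : nat :=
  #|[set [set u; v] | u in [set: V], v in [set: V] & e u v && separated tr bag t u v]|.

Definition crossing_number (V N : finType) (e : rel V) (tr : rel N) (bag : V -> N)
  : nat := \max_(t : N) cross e tr bag t.

Definition thickness_le (V N : finType) (bag : V -> N) (alpha : nat) : Prop :=
  forall t : N, #|bagset bag t| <= alpha.

Definition ecrw_is (alpha : nat) (V : finType) (e : rel V) (k : nat) : Prop :=
  (exists (N : finType) (tr : rel N) (bag : V -> N),
      [/\ is_tree tr, thickness_le bag alpha & crossing_number e tr bag = k]) /\
  (forall (N : finType) (tr : rel N) (bag : V -> N),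
      is_tree tr -> thickness_le bag alpha -> k <= crossing_number e tr bag).

(* Main.v *)
Require Import Defs.
From mathcomp Require Import all_boot zify.
Set Implicit Arguments. Unset Strict Implicit. Unset Printing Implicit Defensive.

Definition exrel (N : finType) (tr : rel N) (x y : N) : rel N :=
  [rel a b | tr a b && ~~ (((a == x) && (b == y)) || ((a == y) && (b == x)))].

Lemma exrel_sym (N : finType) (tr : rel N) x y : symmetric tr -> symmetric (exrel tr x y).
Proof.
by move=> st a b; rewrite /exrel /= st orbC (andbC (b==x)) (andbC (b==y)).
Qed.

Lemma tree_G (N : finType) (tr : rel N) x y : is_tree tr -> tr x y ->
  connect (exrel tr x y) y x -> False.
Proof.
case=> _ st irr _ acyc txy /connectP [p pp lp].
move: lp; case: (shortenP pp) => p' pp' up' _ lp'.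
case: p' pp' up' lp' => [|z [|w q]] /= pp' up' lp'.
- by move: txy; rewrite lp' irr.
- by subst z; move: pp'; rewrite /= andbT /exrel /= !eqxx orbT andbF.
- apply: (negP (acyc (y :: z :: w :: q) up' isT)) => //.
  rewrite /cycle rcons_path.
  have -> : path tr y (z :: w :: q).
    have pp2 : path (exrel tr x y) y (z::w::q) by []. by apply: (sub_path _ pp2) => a b; rewrite /exrel /= => /andP [].
  by rewrite /= -lp'.
Qed.

Lemma sc_sub (N : finType) (tr : rel N) t x y a b :
  (t == x) || (t == y) -> connect [rel a b | [&& tr a b, a != t & b != t]] a b ->
  connect (exrel tr x y) a b.
Proof.
move=> ht; apply: connect_sub => c d /= /and3P [tcd ct dt]; apply: connect1 => /=.
rewrite /exrel /= tcd /=; apply/negP => /orP [] /andP [/eqP ? /eqP ?]; subst;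
  by case/orP: ht => /eqP ?; subst; rewrite ?eqxx in ct dt.
Qed.

Lemma tree_F2 (N : finType) (tr : rel N) s s' u : is_tree tr -> tr s s' ->
  u != s -> u != s' -> same_comp tr s u s' -> same_comp tr s' u s -> False.
Proof.
move=> T tss' us us' c1 c2; have [_ st _ _ _] := T.
apply: (tree_G T tss').
have sy := sym_connect_sym (exrel_sym s s' st).
apply: connect_trans (_ : connect (exrel tr s s') u s).
  by rewrite sy; apply: (@sc_sub _ _ s); rewrite ?eqxx.
by apply: (@sc_sub _ _ s'); rewrite ?eqxx ?orbT.
Qed.

Lemma tree_F1 (N : finType) (tr : rel N) s s' : is_tree tr -> s != s' ->
  (forall t, t != s -> t != s' -> same_comp tr t s s') -> tr s s'.
Proof.
move=> T ss' H; have [_ st irr conn _] := T.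
case/connectP: (conn s s') => p pp lp.
move: lp; case: (shortenP pp) => p' pp' up' _ lp'.
case: p' pp' up' lp' => [|z [|w q]] /= pp' up' lp'.
- by rewrite lp' eqxx in ss'.
- by subst; move: pp'; rewrite andbT.
- case/and3P: pp' => tsz tzw pq.
  move: up'; rewrite !inE negb_or => /andP [/andP [sz /norP [sw sq]]] /andP [/norP [zw zq] uq].
  have zs' : z != s'.
    apply/negP => /eqP E; move: lp'; rewrite -E => lp'.
    have : last w q \in w :: q by apply: mem_last.
    by rewrite -lp' inE (negbTE zw) (negbTE zq).
  have zs : z != s by rewrite eq_sym.
  exfalso; apply: (tree_G T tsz).
  have sy := sym_connect_sym (exrel_sym s z st).
  apply: connect_trans (_ : connect (exrel tr s z) s' s).
    apply/connectP; exists (w :: q); last by [].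
    apply: (@sub_in_path _ (predC1 s) tr).
    + move=> a b /= As Bs tab; rewrite /exrel /= tab /=.
      by rewrite (negbTE As) (negbTE Bs) andbF.
    + apply/and3P; split; [exact: zs | by move: sw; rewrite eq_sym | apply/allP => c cq; rewrite inE; apply: contraNneq sq => <-; exact: cq].
    + by apply/andP; split.
  by rewrite sy; apply: (@sc_sub _ _ z); rewrite ?eqxx ?orbT //; apply: H.
Qed.

Definition startr (V : finType) : rel (option V) :=
  fun x y => (x == None) != (y == None).

Lemma star_tree (V : finType) : is_tree (@startr V).
Proof.
split.
- by apply/card_gt0P; exists None.
- by move=> x y; rewrite /startr eq_sym.
- by move=> x; rewrite /startr eqxx.
- move=> x y.
  have hN : forall z : option V, connect (@startr V) None z.
    case=> [z|]; last exact: connect0.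
    by apply: connect1.
  have hN' : forall z : option V, connect (@startr V) z None.
    case=> [z|]; last exact: connect0.
    by apply: connect1.
  exact: connect_trans (hN' x) (hN y).
- case=> [|x0 [|x1 [|x2 r]]] //= Hu _.
  rewrite /cycle /=.
  case: x1 Hu => [y1|] Hu.
  + case: x0 Hu => [y0|] Hu; first by rewrite /startr /=.
    case: x2 Hu => [y2|] Hu; first by rewrite /startr /=.
    by move: Hu; rewrite !inE /=. 
  + case: x0 Hu => [y0|] Hu; last by rewrite /startr /=.
    case: x2 Hu => [y2|] Hu; last by rewrite /startr /= .
    case: r Hu => [|x3 r] Hu; first by rewrite /startr /=.
    case: x3 Hu => [y3|] Hu; first by rewrite /startr /= .
    by move: Hu; rewrite !inE /= ?orbT ?andbF. 
Qed.

Definition VV (a k : nat) := ('I_a.+1 + 'I_k)%type.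
Definition ee (a k : nat) : rel (VV a k) := fun x y =>
  match x, y with inl _, inr _ => true | inr _, inl _ => true | _, _ => false end.

Lemma cnt (a k : nat) (N : finType) (tr : rel N) (bag : VV a k -> N) (t : N)
  (D : {set 'I_k}) (g : 'I_k -> 'I_a.+1) :
  (forall j, j \in D -> separated tr bag t (inr j) (inl (g j))) ->
  #|D| <= cross (@ee a k) tr bag t.
Proof.
move=> H.
rewrite -(@card_in_imset _ _ (fun j => [set (inr j : VV a k); inl (g j)]) D).
  apply: subset_leq_card; apply/subsetP => X /imsetP [j jD ->].
  apply/imset2P; exists (inr j : VV a k) (inl (g j) : VV a k) => //.
  by rewrite !inE /= H.
move=> j1 j2 _ _ E.
have : (inr j1 : VV a k) \in [set (inr j2 : VV a k); inl (g j2)] by rewrite -E set21.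
by rewrite !inE => /orP [/eqP [] //|].
Qed.

Lemma cnt2 (a k : nat) (N : finType) (bag : VV a k -> N) (t : N) :
  thickness_le bag a -> #|[set j : 'I_k | bag (inr j) == t]| <= a.
Proof.
move=> H; apply: leq_trans (H t).
rewrite -(@card_in_imset _ _ (fun j => (inr j : VV a k))); last by move=> x y _ _ [].
apply: subset_leq_card; apply/subsetP => X /imsetP [j jD ->].
by rewrite /bagset inE; rewrite inE in jD.
Qed.

Lemma lower (a k m : nat) (N : finType) (tr : rel N) (bag : VV a k -> N) :
  is_tree tr -> thickness_le bag a -> k = 2*m + 2*a ->
  m <= crossing_number (@ee a k) tr bag.
Proof.
move=> T H Hk; have [_ st _ _ _] := T.
have [i [i' ii']] : exists i i', bag (inl i) != bag (inl i').
  case: (boolP [exists i, bag (inl i) != bag (inl ord0)]) => [/existsP [i Hi]|].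
    by exists i, ord0.
  rewrite negb_exists => /forallP Hall; exfalso.
  have h1 : #|[set (inl i : VV a k) | i in [set: 'I_a.+1]]|
      <= #|bagset bag (bag (inl ord0))|.
    apply: subset_leq_card; apply/subsetP => X /imsetP [i _ ->].
    by rewrite /bagset inE; move: (Hall i); rewrite negbK.
  move: h1; rewrite card_in_imset ?cardsT ?card_ord; last by move=> x y _ _ [].
  move=> h1; have := leq_trans h1 (H _); by rewrite ltnn.
set s := bag (inl i) in ii'; set s' := bag (inl i') in ii'.
have scsym : forall t x y, same_comp tr t x y = same_comp tr t y x.
  move=> t x y; rewrite /same_comp; apply: sym_connect_sym => c d /=.
  by rewrite st (andbC (c != t)).
have cm : forall t, cross (@ee a k) tr bag t <= crossing_number (@ee a k) tr bag.
  by move=> t; rewrite /crossing_number; exact: (@leq_bigmax N _ t).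
case: (boolP [exists t, [&& t != s, t != s' & ~~ same_comp tr t s s']]).
- move/existsP => [t /and3P [ts ts' nsc]].
  pose g j := if same_comp tr t (bag (inr j)) s then i' else i.
  have c1 : #|[set j : 'I_k | bag (inr j) != t]| <= cross (@ee a k) tr bag t.
    apply: (@cnt _ _ _ _ _ _ _ g) => j; rewrite inE => jt.
    rewrite /g; case: ifP => hs; rewrite /separated.
    + apply/and3P; split => //; first by rewrite eq_sym.
      apply/negP => h; move/negP: nsc; apply.
      by apply: connect_trans h; rewrite -/(same_comp tr t _ _) scsym.
    + by rewrite jt /s eq_sym ts /= hs.
  have c2 := cnt2 t H.
  have c3 := cardsC [set j : 'I_k | bag (inr j) == t].
  have E : ~: [set j : 'I_k | bag (inr j) == t] = [set j | bag (inr j) != t].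
    by apply/setP => j; rewrite !inE.
  rewrite E card_ord in c3.
  have := cm t; move: c1 c2 c3 Hk; set x := #|[set j | bag (inr j) != t]|; set y := #|[set j | bag (inr j) == t]|. lia.
- rewrite negb_exists => /forallP Hn.
  have tss' : tr s s'.
    apply: (tree_F1 T ii') => t ts ts'; move: (Hn t); by rewrite ts ts' /= negbK.
  pose D := [set j : 'I_k | (bag (inr j) != s) && (bag (inr j) != s')].
  pose D1 := [set j in D | ~~ same_comp tr s (bag (inr j)) s'].
  pose D2 := [set j in D | ~~ same_comp tr s' (bag (inr j)) s].
  have c1 : #|D1| <= cross (@ee a k) tr bag s.
    apply: (@cnt _ _ _ _ _ _ _ (fun _ => i')) => j; rewrite !inE => /andP [/andP [h1 h2] h3].
    by rewrite /separated h1 h3 /= eq_sym ii'.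
  have c2 : #|D2| <= cross (@ee a k) tr bag s'.
    apply: (@cnt _ _ _ _ _ _ _ (fun _ => i)) => j; rewrite !inE => /andP [/andP [h1 h2] h3].
    by rewrite /separated h2 h3 /= ii'.
  have c3 : D \subset D1 :|: D2.
    apply/subsetP => j jD; have := jD; rewrite !inE => /andP [h1 h2].
    rewrite h1 h2 /=; apply/negPn/negP => /norP [n1 n2].
    exact: (tree_F2 T tss' h1 h2 (negbNE n1) (negbNE n2)).
  have c4 : #|D1 :|: D2| <= #|D1| + #|D2| by rewrite cardsU leq_subr.
  have c5 : ~: D \subset [set j : 'I_k | bag (inr j) == s] :|: [set j : 'I_k | bag (inr j) == s'].
    apply/subsetP => j; rewrite !inE negb_and !negbK; done.
  have c6 := cardsC D; rewrite card_ord in c6.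
  have c7 := subset_leq_card c5.
  have c8 := subset_leq_card c3.
  have c9 : #|[set j : 'I_k | bag (inr j) == s] :|: [set j : 'I_k | bag (inr j) == s']| <= 2 * a.
    by rewrite cardsU; have := cnt2 s H; have := cnt2 s' H; lia.
  have := cm s; have := cm s'; lia.
Qed.

From Stdlib Require Import Classical.

Lemma exmin (P : nat -> Prop) : (exists n, P n) -> exists n, P n /\ forall m, P m -> n <= m.
Proof.
move=> [n0 Pn]; apply: NNPP => Hno.
suff : forall n j, j <= n -> ~ P j by move/(_ n0 n0 (leqnn n0)); apply.
elim=> [|n IH] j.
  rewrite leqn0 => /eqP -> P0; apply: Hno; exists 0; split => //.
case: (ltngtP j n.+1) => // [jn _|-> _ Pn1]; first exact: IH.
apply: Hno; exists n.+1; split => // m Pm; rewrite leqNgt; apply/negP => mn.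
exact: (IH m mn Pm).
Qed.

Lemma ee_sym a k : symmetric (@ee a k).
Proof. by case=> x [] y. Qed.

Lemma ee_irr a k : irreflexive (@ee a k).
Proof. by case. Qed.

Definition bagB (a k : nat) (v : VV a k) : option (VV a k) :=
  match v with inl _ => None | inr _ => Some v end.

Lemma betadec (a k beta : nat) : a < beta -> ecrw_is beta (@ee a k) 0.
Proof.
move=> ab; split => //; exists (option (VV a k) : finType), (@startr _), (@bagB a k).
split; first exact: star_tree.
- case=> [w|].
  + apply: leq_trans (subset_leq_card (_ : _ \subset [set w])) _.
      apply/subsetP => v; rewrite /bagset !inE; case: v => // j /eqP [->].
    by rewrite cards1; apply: leq_ltn_trans ab.
  + apply: leq_trans (subset_leq_card (_ : _ \subset [set (inl i : VV a k) | i in [set: 'I_a.+1]])) _.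
      apply/subsetP => v; rewrite /bagset !inE; case: v => // i _.
      by apply/imsetP; exists i.
    by rewrite card_in_imset ?cardsT ?card_ord //; move=> x y _ _ [].
- rewrite /crossing_number; apply: big1 => t _.
  apply/eqP; rewrite cards_eq0; apply/eqP/setP => X; rewrite inE.
  apply/negP => /imset2P [u v _]; rewrite !inE => /andP [euv sepuv] _.
  move: euv sepuv; case: u => [i|j]; case: v => [i'|j'] //= _;
    rewrite /separated /= => /and3P [h1 h2]; apply/negP; rewrite negbK;
    by apply: connect1; rewrite /= h1 h2.
Qed.

Lemma alphadec (a k alpha : nat) : 0 < alpha -> exists c, ecrw_is alpha (@ee a k) c.
Proof.
move=> a0.
pose P c := exists (N : finType) (tr : rel N) (bag : VV a k -> N),
      [/\ is_tree tr, thickness_le bag alpha & crossing_number (@ee a k) tr bag = c].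
have [c [Pc Hmin]] : exists c, P c /\ forall m, P m -> c <= m.
  apply: exmin.
  exists (crossing_number (@ee a k) (@startr (VV a k)) (@Some (VV a k))).
  exists (option (VV a k) : finType), (@startr _), (@Some (VV a k)); split => //.
    exact: star_tree.
  case=> [w|].
  + apply: leq_trans (subset_leq_card (_ : _ \subset [set w])) _.
      by apply/subsetP => v; rewrite /bagset !inE => /eqP [->].
    by rewrite cards1.
  + apply: leq_trans (subset_leq_card (_ : _ \subset set0)) _.
      by apply/subsetP => v; rewrite /bagset !inE.
    by rewrite cards0.
exists c; split => //.
move=> N tr bag T H; apply: Hmin; by exists N, tr, bag.
Qed.

Theorem lemma3p4 (alpha beta : nat) :
  0 < alpha -> alpha < beta ->
  ~ (exists f : nat -> nat,
       forall (V : finType) (e : rel V), symmetric e -> irreflexive e ->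
       forall a b : nat, ecrw_is alpha e a -> ecrw_is beta e b -> a <= f b).
Proof.
move=> a0 ab [f Hf].
pose m := (f 0).+1; pose k := 2 * m + 2 * alpha.
have [c Hc] := @alphadec alpha k alpha a0.
have Hb := @betadec alpha k beta ab.
have := Hf (VV alpha k) (@ee alpha k) (@ee_sym _ _) (@ee_irr _ _) c 0 Hc Hb.
case: Hc => [[N [tr [bag [T Ht Hcn]]]] _].
have := @lower alpha k m N tr bag T Ht erefl.
rewrite Hcn /m; lia.
Qed.
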